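(* Let $X=X_\Sigma$ be the projective toric manifold described in the context (Picard number three, no Fano contraction, with parameters $p_0,\dots,p_4$, $b_1,\dots,b_{p_3}$, $c_2,\dots,c_{p_2}$, normalized so that $c_2=\min\{c_2,\dots,c_{p_2}\}$ and $b_1=\min\{b_1,\dots,b_{p_3}\}$). If $\mathrm{ch}_2(X)$ is nef, then $b_1\ge 1$ and $p_2>p_3$; in particular $p_2\ge 2$.
   Context: Let $N=\mathbb{Z}^d$ and let $\Sigma$ be a smooth projective complete fan in $N_\mathbb{R}$ whose set of primitive ray generators is $\{v_1,\dots,v_{p_0},y_1,\dots,y_{p_1},z_1,\dots,z_{p_2},t_1,\dots,t_{p_3},u_1,\dots,u_{p_4}\}$, where $p_0,\dots,p_4$ are positive integers with $p_0+p_1+p_2+p_3+p_4-3=d$. A primitive collection is a set of ray generators not generating a cone of $\Sigma$ while every proper subset does. The primitive collections of $\Sigma$ are exactly $\{v_i\}\cup\{y_j\}$, $\{y_j\}\cup\{z_j\}$, $\{z_j\}\cup\{t_j\}$, $\{t_j\}\cup\{u_j\}$, $\{u_j\}\cup\{v_j\}$ (all elements of the indicated groups), with primitive relations $v_1+\cdots+v_{p_0}+y_1+\cdots+y_{p_1}=c_2z_2+\cdots+c_{p_2}z_{p_2}+(b_1+1)t_1+\cdots+(b_{p_3}+1)t_{p_3}$, $y_1+\cdots+y_{p_1}+z_1+\cdots+z_{p_2}=u_1+\cdots+u_{p_4}$, $z_1+\cdots+z_{p_2}+t_1+\cdots+t_{p_3}=0$, $t_1+\cdots+t_{p_3}+u_1+\cdots+u_{p_4}=y_1+\cdots+y_{p_1}$,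 $u_1+\cdots+u_{p_4}+v_1+\cdots+v_{p_0}=c_2z_2+\cdots+c_{p_2}z_{p_2}+b_1t_1+\cdots+b_{p_3}t_{p_3}$, with $b_i,c_j\in\mathbb{Z}_{\ge0}$, and $c_2=\min_j c_j$, $b_1=\min_i b_i$. (Every projective toric manifold of Picard number three without Fano contraction has such a fan.) $X=X_\Sigma$. With $D_1,\dots,D_n$ the torus invariant prime divisors, $\mathrm{ch}_2(X)=\frac12\sum D_i^2$, and $\mathrm{ch}_2(X)$ is nef if $(\mathrm{ch}_2(X)\cdot S)\ge0$ for every 2-dimensional torus invariant irreducible closed subvariety $S\subset X$. *)

(* Defs.v *)
From HB Require Import structures.
From mathcomp Require Import all_boot all_order all_algebra.
Set Implicit Arguments. Unset Strict Implicit. Unset Printing Implicit Defensive.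
Import Order.TTheory GRing.Theory Num.Theory.
Local Open Scope ring_scope.

(* Index set of the ray generators
   v_1..v_p0, y_1..y_p1, z_1..z_p2, t_1..t_p3, u_1..u_p4
   (0-based ordinals: the i-th ordinal of a group is the paper's index i+1). *)
Definition gen (p0 p1 p2 p3 p4 : nat) : finType :=
  ('I_p0 + 'I_p1 + 'I_p2 + 'I_p3 + 'I_p4)%type.

Section Gens.
Context {p0 p1 p2 p3 p4 : nat}.
Definition gv (i : 'I_p0) : gen p0 p1 p2 p3 p4 := inl (inl (inl (inl i))).
Definition gy (i : 'I_p1) : gen p0 p1 p2 p3 p4 := inl (inl (inl (inr i))).
Definition gz (i : 'I_p2) : gen p0 p1 p2 p3 p4 := inl (inl (inr i)).
Definition gt (i : 'I_p3) : gen p0 p1 p2 p3 p4 := inl (inr i).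
Definition gu (i : 'I_p4) : gen p0 p1 p2 p3 p4 := inr i.

Definition grp (r : gen p0 p1 p2 p3 p4) : nat :=
  match r with
  | inl (inl (inl (inl _))) => 0
  | inl (inl (inl (inr _))) => 1
  | inl (inl (inr _)) => 2
  | inl (inr _) => 3
  | inr _ => 4
  end.

(* The five primitive collections {v}u{y}, {y}u{z}, {z}u{t}, {t}u{u}, {u}u{v}. *)
Definition prim_coll (k : 'I_5) : {set gen p0 p1 p2 p3 p4} :=
  [set r | (grp r == k) || (grp r == (k.+1 %% 5)%N)].

(* Cones of Sigma (identified with their sets of ray generators):
   exactly the subsets containing no primitive collection. *)
Definition pc_cone (S : {set gen p0 p1 p2 p3 p4}) : bool :=
  [forall k : 'I_5, ~~ (prim_coll k \subset S)].
End Gens.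

Section Toric.
Variables (d : nat) (G : finType).

(* monomials in the variables x_r (r : G), as exponent vectors *)
Definition mono_deg (m : {ffun G -> nat}) : nat := (\sum_r m r)%N.
Definition unit_mono (r : G) : {ffun G -> nat} := [ffun s => nat_of_bool (s == r)].
Definition set_mono (S : {set G}) : {ffun G -> nat} := [ffun s => nat_of_bool (s \in S)].
Definition madd (m1 m2 : {ffun G -> nat}) : {ffun G -> nat} := [ffun s => (m1 s + m2 s)%N].
Definition msupp (m : {ffun G -> nat}) : {set G} := [set r | (0 < m r)%N].

(* The fan with ray generators w r (r : G) and cones {cone_{w r | r in S} : cone S}
   is a smooth complete fan: every lattice point has a unique expression as a
   nonnegative integral combination of the generators of one cone. *)
Definition smooth_complete_fan (w : G -> 'rV[int]_d) (cone : {set G} -> bool) : Prop :=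
  forall x : 'rV[int]_d,
    exists! a : {ffun G -> nat}, cone (msupp a) /\ \sum_r w r *+ a r = x.

(* deg : degree map A^d(X)_Q -> Q on the Chow ring
   A*(X)_Q = Q[x_r] / (Stanley-Reisner ideal + linear relations),
   given on degree-d monomials. *)
Definition is_chow_degree (w : G -> 'rV[int]_d) (cone : {set G} -> bool)
    (deg : {ffun G -> nat} -> rat) : Prop :=
  [/\ (* Stanley-Reisner: monomials whose support is not a cone vanish *)
      forall m, mono_deg m = d -> ~~ cone (msupp m) -> deg m = 0,
      (* linear relations  sum_r <e_j^*, w r> x_r  *)
      forall (m : {ffun G -> nat}) (j : 'I_d), mono_deg m = d.-1 ->
        \sum_r (w r 0 j)%:~R * deg (madd m (unit_mono r)) = 0
    & (* the class of a torus fixed point V(sigma) = prod_{r in sigma} x_r has degree 1 *)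
      forall S, cone S -> #|S| = d -> deg (set_mono S) = 1].

(* (ch_2(X) . V(tau)) = 1/2 sum_r deg(x_r^2 * x_tau) *)
Definition ch2_dot (deg : {ffun G -> nat} -> rat) (tau : {set G}) : rat :=
  2^-1 * \sum_r deg (madd (set_mono tau) (madd (unit_mono r) (unit_mono r))).

(* ch_2(X) nef: nonnegative on every torus invariant surface V(tau),
   tau a cone of dimension d-2. *)
Definition ch2_nef (w : G -> 'rV[int]_d) (cone : {set G} -> bool) : Prop :=
  exists deg, is_chow_degree w cone deg /\
    forall tau : {set G}, cone tau -> #|tau| = (d - 2)%N -> 0 <= ch2_dot deg tau.
End Toric.

(* Main.v *)
Require Import Defs.
From HB Require Import structures.
From mathcomp Require Import all_boot all_order all_algebra.
From mathcomp Require Import ring lra zify.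
Import Order.TTheory GRing.Theory Num.Theory.
Local Open Scope ring_scope.
Set Implicit Arguments. Unset Strict Implicit. Unset Printing Implicit Defensive.

Lemma rowspace_perp (G : finType) (d : nat) (W : G -> 'rV[rat]_d) (f : G -> rat) :
 (forall a : G -> rat, \sum_r a r *: W r = 0 -> \sum_r a r * f r = 0) ->
 exists lam : 'cV[rat]_d, forall r, f r = (W r *m lam) 0 0.
Proof.
move=> Hperp.
pose n := #|G|.
pose Wm : 'M[rat]_(n, d) := \matrix_(i < n) W (enum_val i).
pose fc : 'cV[rat]_n := \col_(i < n) f (enum_val i).
pose K := kermx Wm.
have KW : K *m Wm = 0 by apply/sub_kermxP.
have Kf : K *m fc = 0.
  apply/matrixP => k j; rewrite !mxE (ord1 j).
  have Hk : row k K *m Wm = 0 by rewrite -row_mul KW row0.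
  have := Hperp (fun r => K k (enum_rank r)).
  have -> : \sum_r K k (enum_rank r) *: W r = row k K *m Wm.
    apply/rowP => l; rewrite summxE !mxE.
    rewrite (reindex (fun i : 'I_n => enum_val i)) /=; last first.
      by exists (fun x : G => enum_rank x) => x _; rewrite ?enum_valK ?enum_rankK.
    apply: eq_bigr => i _; rewrite !mxE enum_valK; congr (_ * _).

  move/(_ Hk) => H.
  rewrite -[RHS]H (reindex (fun i : 'I_n => enum_val i)) /=; last first.
    by exists (fun x : G => enum_rank x) => x _; rewrite ?enum_valK ?enum_rankK.
  by apply: eq_bigr => i _; rewrite ?enum_valK ?mxE.
have s1 : (fc^T <= kermx K^T)%MS by apply/sub_kermxP; rewrite -trmx_mul Kf trmx0.
have s2 : (Wm^T <= kermx K^T)%MS by apply/sub_kermxP; rewrite -trmx_mul KW trmx0.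
have rk : \rank (kermx K^T) = \rank Wm^T.
  rewrite mxrank_ker mxrank_tr mxrank_ker mxrank_tr subKn //.
  exact: rank_leq_row.
have s3 : (kermx K^T <= Wm^T)%MS.
  by rewrite -(mxrank_leqif_sup s2) rk.
have /submxP [D HD] : (fc^T <= Wm^T)%MS by exact: submx_trans s1 s3.
exists D^T => r.
have := congr1 (fun M : 'M_(1, n) => M 0 (enum_rank r)) HD.
rewrite /= !mxE enum_rankK => ->.
by apply: eq_bigr => j _; rewrite !mxE enum_rankK mulrC.
Qed.
Definition Wq (G : finType) d (w : G -> 'rV[int]_d) (r : G) : 'rV[rat]_d :=
  \row_j ((w r 0 j)%:~R : rat).

Lemma mxzE m n (A : 'M[int]_(m,n)) (z : int) i j : (A *~ z) i j = A i j *~ z.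
Proof. by case: z => k /=; rewrite ?mxE mulmxnE. Qed.

Lemma indep_cone (G : finType) d (w : G -> 'rV[int]_d) (cone : {set G} -> bool) (S : {set G}) :
  smooth_complete_fan w cone -> (forall S' : {set G}, S' \subset S -> cone S') ->
  forall a : G -> rat, \sum_r a r *: Wq w r = 0 -> (forall r, r \notin S -> a r = 0) ->
  forall r, a r = 0.
Proof.
move=> Hfan Hcone a Ha HS.
pose N : int := \prod_r denq (a r).
pose z r : int := numq (a r) * \prod_(s | s != r) denq (a s).
have Hz r : (z r)%:~R = a r * N%:~R :> rat.
  rewrite /z /N [X in _ = _ * X%:~R](bigD1 r) //= !intrM numqE; ring.
have N0 : N != 0 by rewrite /N; apply/prodf_neq0 => i _; exact: denq_neq0.
have Hsum : \sum_r w r *~ z r = 0.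
  apply/rowP => j; apply: (@intr_inj rat); rewrite summxE mxE rmorph_sum /=.
  have := congr1 (fun M : 'rV[rat]_d => M 0 j * N%:~R) Ha.
  rewrite /= summxE mxE mul0r mulr_suml => H; rewrite (_ : 0%:~R = 0) // -[RHS]H.
  apply: eq_bigr => r _; rewrite !mxE mxzE mulrzz intrM Hz; ring.
pose P := [ffun r => if (0 <= z r)%R then `|z r|%N else 0%N].
pose Q := [ffun r => if (z r < 0)%R then `|z r|%N else 0%N].
have HPQ r : z r = (P r)%:Z - (Q r)%:Z.
  rewrite !ffunE; case: (ltrP (z r) 0) => h.
    by rewrite ltz0_abs // sub0r opprK.
  by rewrite gez0_abs // subr0.
have HS' r : r \notin S -> z r = 0.
  by move=> /HS h; rewrite /z h mul0r.
have Hsupp (F : {ffun G -> nat}) : (forall r, r \notin S -> F r = 0%N) -> cone (msupp F).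
  move=> hF; apply: Hcone; apply/subsetP => r; rewrite inE.
  by apply: contraTT => /hF ->.
have eqPQ : \sum_r w r *+ P r = \sum_r w r *+ Q r.
  apply/eqP; rewrite -subr_eq0 -sumrB; apply/eqP; rewrite -[RHS]Hsum.
  by apply: eq_bigr => r _; rewrite HPQ mulrzBr.
have [x0 [_ Hu]] := Hfan (\sum_r w r *+ P r).
have PQ : P = Q.
  rewrite -(Hu P) ?(Hu Q) //; split => //; apply: Hsupp => r /HS' h; rewrite ffunE h //.
move=> r.
have : z r = 0 by rewrite HPQ PQ subrr.
move/eqP; rewrite -(intr_eq0 rat) Hz mulf_eq0 intr_eq0 (negbTE N0) orbF.
by move/eqP.
Qed.

Lemma zmod4 (V : zmodType) (a b c e : V) : a - b - c + e = (e + a) - (b + c).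
Proof. by rewrite opprD !addrA [e + a]addrC -!addrA; congr (_ + _); rewrite [RHS]addrC -addrA. Qed.
Section Mono.
Variable G : finType.
Implicit Types (m : {ffun G -> nat}) (S A : {set G}) (r x y : G).
Lemma maddC m1 m2 : madd m1 m2 = madd m2 m1.
Proof. by apply/ffunP => r; rewrite !ffunE addnC. Qed.
Lemma maddA m1 m2 m3 : madd m1 (madd m2 m3) = madd (madd m1 m2) m3.
Proof. by apply/ffunP => r; rewrite !ffunE addnA. Qed.
Lemma mono_deg_madd m1 m2 : mono_deg (madd m1 m2) = (mono_deg m1 + mono_deg m2)%N.
Proof. by rewrite /mono_deg -big_split; apply: eq_bigr => r _; rewrite ffunE. Qed.
Lemma mono_deg_set S : mono_deg (set_mono S) = #|S|.
Proof.
rewrite /mono_deg -sum1_card [RHS]big_mkcond; apply: eq_bigr => r _.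
by rewrite ffunE; case: (r \in S).
Qed.
Lemma unit_set r : unit_mono r = set_mono [set r].
Proof. by apply/ffunP => s; rewrite !ffunE inE. Qed.
Lemma mono_deg_unit r : mono_deg (unit_mono r) = 1%N.
Proof. by rewrite unit_set mono_deg_set cards1. Qed.
Lemma msupp_set S : msupp (set_mono S) = S.
Proof. by apply/setP => r; rewrite !inE ffunE; case: (r \in S). Qed.
Lemma madd_pair A x y : x \in A -> y \in A -> x != y ->
  madd (set_mono (~: A)) (madd (unit_mono x) (unit_mono y)) = set_mono (x |: (y |: ~: A)).
Proof.
move=> hx hy nxy; apply/ffunP => r; rewrite !ffunE !inE.
case: (eqVneq r x) => [->|nx]; first by rewrite hx (negbTE nxy).
case: (eqVneq r y) => [->|ny]; first by rewrite hy.
by case: (r \in A).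
Qed.
Lemma card_pair A x y : x \in A -> y \in A -> x != y ->
  #|x |: (y |: ~: A)| = (#|~: A|).+2.
Proof.
move=> hx hy nxy; rewrite !cardsU1 !inE hx hy (negbTE nxy) /=.
by rewrite add1n.
Qed.
End Mono.

Section Main.
Variables (d p0 p1 p2 p3 p4 : nat) (b c : nat -> nat).
Local Notation G := (gen p0 p1 p2 p3 p4).
Variable (w : G -> 'rV[int]_d).
Hypotheses (H0 : (0 < p0)%N) (H1 : (0 < p1)%N) (H2 : (0 < p2)%N) (H3 : (0 < p3)%N) (H4 : (0 < p4)%N).
Hypothesis hd : d = (p0 + p1 + p2 + p3 + p4 - 3)%N.
Hypothesis Hfan : smooth_complete_fan w pc_cone.
Hypothesis R2 : \sum_(i < p1) w (gy i) + \sum_(i < p2) w (gz i) = \sum_(i < p4) w (gu i).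
Hypothesis R4 : \sum_(i < p3) w (gt i) + \sum_(i < p4) w (gu i) = \sum_(i < p1) w (gy i).
Hypothesis R5 : \sum_(i < p4) w (gu i) + \sum_(i < p0) w (gv i)
    = \sum_(j < p2 | (0 < j)%N) w (gz j) *+ c j.+1
      + \sum_(i < p3) w (gt i) *+ b i.+1.

Definition v1 : G := gv (Ordinal H0).
Definition y1 : G := gy (Ordinal H1).
Definition z1 : G := gz (Ordinal H2).
Definition t1 : G := gt (Ordinal H3).
Definition u1 : G := gu (Ordinal H4).

Lemma sumG (V : nmodType) (F : G -> V) : \sum_r F r = \sum_i F (gv i) + \sum_i F (gy i) + \sum_i F (gz i) + \sum_i F (gt i) + \sum_i F (gu i).
Proof. by rewrite !big_sumType. Qed.
Lemma cardG : #|G| = (p0 + p1 + p2 + p3 + p4)%N.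
Proof. by rewrite !card_sum !card_ord. Qed.

Definition cc (j : nat) : nat := if (0 < j)%N then c j.+1 else 0%N.

Definition kA (r : G) : int := match r with
  | inl (inl (inl (inl _))) => 0 | inl (inl (inl (inr _))) => 1
  | inl (inl (inr _)) => 1 | inl (inr _) => 0 | inr _ => -1 end.
Definition kB (r : G) : int := match r with
  | inl (inl (inl (inl _))) => 0 | inl (inl (inl (inr _))) => -1
  | inl (inl (inr _)) => 0 | inl (inr _) => 1 | inr _ => 1 end.
Definition kC (r : G) : int := match r with
  | inl (inl (inl (inl _))) => 1 | inl (inl (inl (inr _))) => 0
  | inl (inl (inr j)) => - (cc j)%:Z | inl (inr i) => - (b i.+1)%:Z | inr _ => 1 end.

Lemma relA : \sum_r w r *~ kA r = 0.
Proof.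
have egv : \sum_(i < p0) w (gv i) *~ kA (gv i) = \sum_(i < p0) (0:'rV_d).
  by apply: eq_bigr => i _; rewrite /= ?mulr0z ?mulr1z ?mulrN1z ?mulrNz.
have egy : \sum_(i < p1) w (gy i) *~ kA (gy i) = \sum_(i < p1) w (gy i).
  by apply: eq_bigr => i _; rewrite /= ?mulr0z ?mulr1z ?mulrN1z ?mulrNz.
have egz : \sum_(i < p2) w (gz i) *~ kA (gz i) = \sum_(i < p2) w (gz i).
  by apply: eq_bigr => i _; rewrite /= ?mulr0z ?mulr1z ?mulrN1z ?mulrNz.
have egt : \sum_(i < p3) w (gt i) *~ kA (gt i) = \sum_(i < p3) (0:'rV_d).
  by apply: eq_bigr => i _; rewrite /= ?mulr0z ?mulr1z ?mulrN1z ?mulrNz.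
have egu : \sum_(i < p4) w (gu i) *~ kA (gu i) = \sum_(i < p4) - w (gu i).
  by apply: eq_bigr => i _; rewrite /= ?mulr0z ?mulr1z ?mulrN1z ?mulrNz.
rewrite sumG egv egy egz egt egu.
by rewrite !big1_eq add0r addr0 sumrN R2 subrr.
Qed.

Lemma relB : \sum_r w r *~ kB r = 0.
Proof.
have egv : \sum_(i < p0) w (gv i) *~ kB (gv i) = \sum_(i < p0) (0:'rV_d).
  by apply: eq_bigr => i _; rewrite /= ?mulr0z ?mulr1z ?mulrN1z ?mulrNz.
have egy : \sum_(i < p1) w (gy i) *~ kB (gy i) = \sum_(i < p1) - w (gy i).
  by apply: eq_bigr => i _; rewrite /= ?mulr0z ?mulr1z ?mulrN1z ?mulrNz.
have egz : \sum_(i < p2) w (gz i) *~ kB (gz i) = \sum_(i < p2) (0:'rV_d).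
  by apply: eq_bigr => i _; rewrite /= ?mulr0z ?mulr1z ?mulrN1z ?mulrNz.
have egt : \sum_(i < p3) w (gt i) *~ kB (gt i) = \sum_(i < p3) w (gt i).
  by apply: eq_bigr => i _; rewrite /= ?mulr0z ?mulr1z ?mulrN1z ?mulrNz.
have egu : \sum_(i < p4) w (gu i) *~ kB (gu i) = \sum_(i < p4) w (gu i).
  by apply: eq_bigr => i _; rewrite /= ?mulr0z ?mulr1z ?mulrN1z ?mulrNz.
rewrite sumG egv egy egz egt egu.
by rewrite !big1_eq add0r addr0 sumrN -addrA R4 addNr.
Qed.

Lemma relC : \sum_r w r *~ kC r = 0.
Proof.
have egv : \sum_(i < p0) w (gv i) *~ kC (gv i) = \sum_(i < p0) w (gv i).
  by apply: eq_bigr => i _; rewrite /= ?mulr0z ?mulr1z ?mulrN1z ?mulrNz.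
have egy : \sum_(i < p1) w (gy i) *~ kC (gy i) = \sum_(i < p1) (0:'rV_d).
  by apply: eq_bigr => i _; rewrite /= ?mulr0z ?mulr1z ?mulrN1z ?mulrNz.
have egz : \sum_(i < p2) w (gz i) *~ kC (gz i) = \sum_(i < p2) - (w (gz i) *+ cc i).
  by apply: eq_bigr => i _; rewrite /= ?mulr0z ?mulr1z ?mulrN1z ?mulrNz.
have egt : \sum_(i < p3) w (gt i) *~ kC (gt i) = \sum_(i < p3) - (w (gt i) *+ b i.+1).
  by apply: eq_bigr => i _; rewrite /= ?mulr0z ?mulr1z ?mulrN1z ?mulrNz.
have egu : \sum_(i < p4) w (gu i) *~ kC (gu i) = \sum_(i < p4) w (gu i).
  by apply: eq_bigr => i _; rewrite /= ?mulr0z ?mulr1z ?mulrN1z ?mulrNz.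
rewrite sumG egv egy egz egt egu.
rewrite big1_eq addr0 !sumrN.
have -> : \sum_(i < p2) w (gz i) *+ cc i = \sum_(j < p2 | (0 < j)%N) w (gz j) *+ c j.+1.
  by rewrite [RHS]big_mkcond; apply: eq_bigr => j _; rewrite /cc; case: ifP.
by rewrite zmod4 R5 subrr.
Qed.


Lemma relQ (k : G -> int) : \sum_r w r *~ k r = 0 -> \sum_r (k r)%:~R *: Wq w r = 0.
Proof.
move=> h; apply/rowP => j; rewrite summxE mxE.
transitivity ((\sum_r (w r *~ k r) 0 j)%:~R : rat).
  rewrite rmorph_sum; apply: eq_bigr => r _.
  by rewrite !mxE mxzE mulrzz /= intrM mulrC.
by rewrite -summxE h mxE.
Qed.

Lemma not_sub (k : 'I_5) (A : {set G}) e : e \in prim_coll k -> e \in A -> ~~ (prim_coll k \subset ~: A).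
Proof. by move=> h1 h2; apply/negP => /subsetP /(_ e h1); rewrite inE h2. Qed.

Lemma pc_cone_vzt : pc_cone (~: [set v1; z1; t1]).
Proof.
apply/forallP => -[[|[|[|[|[|k]]]]] hk] //.
- by apply: (@not_sub _ _ v1); rewrite !inE ?eqxx ?orbT.
- by apply: (@not_sub _ _ z1); rewrite !inE ?eqxx ?orbT.
- by apply: (@not_sub _ _ z1); rewrite !inE ?eqxx ?orbT.
- by apply: (@not_sub _ _ t1); rewrite !inE ?eqxx ?orbT.
- by apply: (@not_sub _ _ v1); rewrite !inE ?eqxx ?orbT.
Qed.

Definition kAq r : rat := (kA r)%:~R.
Definition kBq r : rat := (kB r)%:~R.
Definition kCq r : rat := (kC r)%:~R.

Lemma ker_span (a : G -> rat) : \sum_r a r *: Wq w r = 0 -> forall f : G -> rat,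
  \sum_r kAq r * f r = 0 -> \sum_r kBq r * f r = 0 -> \sum_r kCq r * f r = 0 ->
  \sum_r a r * f r = 0.
Proof.
move=> Ha f hA hB hC.
pose al := a z1; pose ga := a v1; pose be := a t1 + (b 1)%:R * ga.
pose a' r := a r - al * kAq r - be * kBq r - ga * kCq r.
have Ha' : \sum_r a' r *: Wq w r = 0.
  rewrite /a' (eq_bigr (fun r => a r *: Wq w r - al *: ((kA r)%:~R *: Wq w r)
     - be *: ((kB r)%:~R *: Wq w r) - ga *: ((kC r)%:~R *: Wq w r))); last first.
    by move=> r _; rewrite !scalerBl !scalerA.
  by rewrite !sumrB -!scaler_sumr Ha (relQ relA) (relQ relB) (relQ relC) !scaler0 !subr0.
have hcone : forall S' : {set G}, S' \subset ~: [set v1; z1; t1] -> pc_cone S'.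
  move=> S' hS; apply/forallP => k; apply: contra (forallP pc_cone_vzt k) => h.
  exact: subset_trans h hS.
have hsupp : forall r, r \notin ~: [set v1; z1; t1] -> a' r = 0.
  move=> r; rewrite inE negbK !inE => /orP [/orP [] |] /eqP ->;
    rewrite /a' /kAq /kBq /kCq /=.
  - rewrite /ga; ring.
  - rewrite /al /cc /=; ring.
  - rewrite /be /ga -pmulrn; ring.
have Z := indep_cone Hfan hcone Ha' hsupp.
rewrite (eq_bigr (fun r => a' r * f r + al * (kAq r * f r) + be * (kBq r * f r) + ga * (kCq r * f r))); last first.
  by move=> r _; rewrite /a'; ring.
rewrite !big_split /= -!mulr_sumr hA hB hC big1 => [|r _]; last by rewrite Z mul0r.
by rewrite !mulr0 !addr0.
Qed.

Lemma keyL (deg : {ffun G -> nat} -> rat) (Hdeg : is_chow_degree w pc_cone deg) (f : G -> rat) m :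
  mono_deg m = d.-1 ->
  \sum_r kAq r * f r = 0 -> \sum_r kBq r * f r = 0 -> \sum_r kCq r * f r = 0 ->
  \sum_r f r * deg (madd m (unit_mono r)) = 0.
Proof.
move=> hm hA hB hC.
have [lam Hl] := rowspace_perp (fun a ha => ker_span ha hA hB hC).
case: Hdeg => _ Hlin _.
rewrite (eq_bigr (fun r => \sum_j lam j 0 * ((w r 0 j)%:~R * deg (madd m (unit_mono r))))); last first.
  move=> r _; rewrite Hl mxE mulr_suml; apply: eq_bigr => j _; rewrite !mxE; ring.
rewrite exchange_big /=; apply: big1 => j _.
by rewrite -mulr_sumr Hlin // mulr0.
Qed.

Lemma d_ge2 : (2 <= d)%N.
Proof. rewrite hd; lia. Qed.
Lemma d_card : d = (#|G| - 3)%N.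
Proof. by rewrite hd cardG. Qed.

Variable deg : {ffun G -> nat} -> rat.
Hypothesis Hdeg : is_chow_degree w pc_cone deg.

Definition M5 : {set G} := [set v1; y1; z1; t1; u1].
Definition tau : {set G} := ~: M5.
Definition q (x y : G) := deg (madd (set_mono tau) (madd (unit_mono x) (unit_mono y))).

Lemma cardM5 : #|M5| = 5%N.
Proof.
have -> : M5 = [set x in [:: v1; y1; z1; t1; u1]] by apply/setP => x; rewrite !inE !orbA.
by rewrite cardsE; apply/card_uniqP.
Qed.
Lemma card_tau : #|tau| = (d - 2)%N.
Proof.
have := cardsC M5; rewrite cardM5 cardG -/tau hd => h; lia.
Qed.
Lemma in_tau r : (r \in tau) = (r \notin M5).
Proof. by rewrite inE. Qed.

Lemma q_sym x y : q x y = q y x.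
Proof. by rewrite /q (maddC (unit_mono x)). Qed.

Lemma sum_delta (g : G -> rat) s : \sum_x g x * (x == s)%:R = g s.
Proof.
rewrite (bigD1 s) //= eqxx mulr1 big1 ?addr0 // => x /negbTE ->.
by rewrite mulr0.
Qed.

Lemma key4 (s s1 s2 s3 s4 : G) (c1 c2 c3 c4 : rat) :
  c1 * kAq s1 + c2 * kAq s2 + c3 * kAq s3 + c4 * kAq s4 = 0 ->
  c1 * kBq s1 + c2 * kBq s2 + c3 * kBq s3 + c4 * kBq s4 = 0 ->
  c1 * kCq s1 + c2 * kCq s2 + c3 * kCq s3 + c4 * kCq s4 = 0 ->
  c1 * q s s1 + c2 * q s s2 + c3 * q s s3 + c4 * q s s4 = 0.
Proof.
move=> hA hB hC.
pose f x := c1 * (x == s1)%:R + c2 * (x == s2)%:R + c3 * (x == s3)%:R + c4 * (x == s4)%:R.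
have Ef (g : G -> rat) : \sum_x g x * f x = c1 * g s1 + c2 * g s2 + c3 * g s3 + c4 * g s4.
  rewrite (eq_bigr (fun x => c1 * (g x * (x == s1)%:R) + c2 * (g x * (x==s2)%:R)
     + c3 * (g x * (x==s3)%:R) + c4 * (g x * (x==s4)%:R))); last by move=> x _; rewrite /f; ring.
  by rewrite !big_split /= -!mulr_sumr !sum_delta.
have hm : mono_deg (madd (set_mono tau) (unit_mono s)) = d.-1.
  rewrite mono_deg_madd mono_deg_set mono_deg_unit card_tau; have := d_ge2; lia.
have := keyL Hdeg (f := f) hm; rewrite !Ef => /(_ hA hB hC).
rewrite (eq_bigr (fun r => q s r * f r)) ?Ef // => r _.
by rewrite mulrC /q maddA.
Qed.

Lemma deg_one S : pc_cone S -> #|S| = d -> deg (set_mono S) = 1.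
Proof. by case: Hdeg => _ _ h; apply: h. Qed.
Lemma deg_zero S : ~~ pc_cone S -> #|S| = d -> deg (set_mono S) = 0.
Proof.
case: Hdeg => h _ _ hS hc; apply: h; first by rewrite mono_deg_set.
by rewrite msupp_set.
Qed.

Lemma q_pair x y : x \in M5 -> y \in M5 -> x != y -> q x y = deg (set_mono (x |: (y |: tau))).
Proof. by move=> *; rewrite /q /tau madd_pair. Qed.
Lemma card_q x y : x \in M5 -> y \in M5 -> x != y -> #|x |: (y |: tau)| = d.
Proof. by move=> *; rewrite /tau card_pair // -/tau card_tau; have := d_ge2; lia. Qed.

Lemma not_sub2 (k : 'I_5) (S : {set G}) e : e \in prim_coll k -> e \notin S -> ~~ (prim_coll k \subset S).
Proof. by move=> h1 h2; apply/negP => /subsetP /(_ e h1); apply/negP. Qed.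

Lemma M5_cases r : r \in M5 -> r = v1 \/ r = y1 \/ r = z1 \/ r = t1 \/ r = u1.
Proof. by rewrite !inE => /orP [/orP [/orP [/orP [] | ] | ] | ] /eqP ->; tauto. Qed.
Lemma qzu : q z1 u1 = 1.
Proof.
rewrite q_pair ?inE ?eqxx ?orbT //; apply: deg_one; last by apply: card_q; rewrite ?inE ?eqxx ?orbT.
apply/forallP => -[[|[|[|[|[|k]]]]] hk] //.
- by apply: (@not_sub2 _ _ y1); rewrite !inE.
- by apply: (@not_sub2 _ _ y1); rewrite !inE.
- by apply: (@not_sub2 _ _ t1); rewrite !inE.
- by apply: (@not_sub2 _ _ t1); rewrite !inE.
- by apply: (@not_sub2 _ _ v1); rewrite !inE.
Qed.
Lemma qzv : q z1 v1 = 1.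
Proof.
rewrite q_pair ?inE ?eqxx ?orbT //; apply: deg_one; last by apply: card_q; rewrite ?inE ?eqxx ?orbT.
apply/forallP => -[[|[|[|[|[|k]]]]] hk] //.
- by apply: (@not_sub2 _ _ y1); rewrite !inE.
- by apply: (@not_sub2 _ _ y1); rewrite !inE.
- by apply: (@not_sub2 _ _ t1); rewrite !inE.
- by apply: (@not_sub2 _ _ t1); rewrite !inE.
- by apply: (@not_sub2 _ _ u1); rewrite !inE.
Qed.
Lemma qtv : q t1 v1 = 1.
Proof.
rewrite q_pair ?inE ?eqxx ?orbT //; apply: deg_one; last by apply: card_q; rewrite ?inE ?eqxx ?orbT.
apply/forallP => -[[|[|[|[|[|k]]]]] hk] //.
- by apply: (@not_sub2 _ _ y1); rewrite !inE.
- by apply: (@not_sub2 _ _ y1); rewrite !inE.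
- by apply: (@not_sub2 _ _ z1); rewrite !inE.
- by apply: (@not_sub2 _ _ u1); rewrite !inE.
- by apply: (@not_sub2 _ _ u1); rewrite !inE.
Qed.
Lemma qvu : q v1 u1 = 0.
Proof.
rewrite q_pair ?inE ?eqxx ?orbT //; apply: deg_zero; last by apply: card_q; rewrite ?inE ?eqxx ?orbT.
rewrite /pc_cone negb_forall; apply/existsP; exists (Ordinal (isT : (4 < 5)%N)); rewrite negbK.
apply/subsetP => r; rewrite inE => hg; rewrite !in_setU1 in_tau.
case hM: (r \in M5); last by rewrite !orbT.
by move: hg; move: hM => /M5_cases [->|[->|[->|[->|->]]]]; rewrite ?eqxx ?orbT.
Qed.
Lemma qvy : q v1 y1 = 0.
Proof.
rewrite q_pair ?inE ?eqxx ?orbT //; apply: deg_zero; last by apply: card_q; rewrite ?inE ?eqxx ?orbT.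
rewrite /pc_cone negb_forall; apply/existsP; exists (Ordinal (isT : (0 < 5)%N)); rewrite negbK.
apply/subsetP => r; rewrite inE => hg; rewrite !in_setU1 in_tau.
case hM: (r \in M5); last by rewrite !orbT.
by move: hg; move: hM => /M5_cases [->|[->|[->|[->|->]]]]; rewrite ?eqxx ?orbT.
Qed.
Lemma qzt : q z1 t1 = 0.
Proof.
rewrite q_pair ?inE ?eqxx ?orbT //; apply: deg_zero; last by apply: card_q; rewrite ?inE ?eqxx ?orbT.
rewrite /pc_cone negb_forall; apply/existsP; exists (Ordinal (isT : (2 < 5)%N)); rewrite negbK.
apply/subsetP => r; rewrite inE => hg; rewrite !in_setU1 in_tau.
case hM: (r \in M5); last by rewrite !orbT.
by move: hg; move: hM => /M5_cases [->|[->|[->|[->|->]]]]; rewrite ?eqxx ?orbT.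
Qed.
Lemma qtu : q t1 u1 = 0.
Proof.
rewrite q_pair ?inE ?eqxx ?orbT //; apply: deg_zero; last by apply: card_q; rewrite ?inE ?eqxx ?orbT.
rewrite /pc_cone negb_forall; apply/existsP; exists (Ordinal (isT : (3 < 5)%N)); rewrite negbK.
apply/subsetP => r; rewrite inE => hg; rewrite !in_setU1 in_tau.
case hM: (r \in M5); last by rewrite !orbT.
by move: hg; move: hM => /M5_cases [->|[->|[->|[->|->]]]]; rewrite ?eqxx ?orbT.
Qed.

Definition B : rat := (b 1)%:R.
Definition gam r := B * kBq r + kCq r.

Lemma kCnat (n : nat) : ((- n%:Z)%:~R : rat) = - n%:R.
Proof. by rewrite rmorphN. Qed.

Lemma kv_v i : kAq (gv i) = 0 /\ kBq (gv i) = 0 /\ kCq (gv i) = 1.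
Proof. by []. Qed.
Lemma kv_y i : kAq (gy i) = 1 /\ kBq (gy i) = -1 /\ kCq (gy i) = 0.
Proof. by []. Qed.
Lemma kv_z i : kAq (gz i) = 1 /\ kBq (gz i) = 0 /\ kCq (gz i) = - (cc i)%:R.
Proof. by rewrite /kCq /= kCnat. Qed.
Lemma kv_t i : kAq (gt i) = 0 /\ kBq (gt i) = 1 /\ kCq (gt i) = - (b i.+1)%:R.
Proof. by rewrite /kCq /= kCnat. Qed.
Lemma kv_u i : kAq (gu i) = -1 /\ kBq (gu i) = 1 /\ kCq (gu i) = 1.
Proof. by []. Qed.


Lemma kv1 : kAq v1 = 0 /\ kBq v1 = 0 /\ kCq v1 = 1.
Proof. exact: kv_v. Qed.
Lemma ky1 : kAq y1 = 1 /\ kBq y1 = -1 /\ kCq y1 = 0.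
Proof. exact: kv_y. Qed.
Lemma ku1 : kAq u1 = -1 /\ kBq u1 = 1 /\ kCq u1 = 1.
Proof. exact: kv_u. Qed.
Lemma kz1 : kAq z1 = 1 /\ kBq z1 = 0 /\ kCq z1 = 0.
Proof. have [a [b' c']] := kv_z (Ordinal H2); rewrite /z1 a b' c'. by rewrite oppr0. Qed.
Lemma kt1 : kAq t1 = 0 /\ kBq t1 = 1 /\ kCq t1 = - B.
Proof. exact: kv_t. Qed.

Lemma dec s r : q s r = kAq r * q s z1 + kBq r * q s t1 + gam r * q s v1.
Proof.
have [az [bz cz]] := kz1.
have [at' [bt ct]] := kt1.
have [av [bv cv]] := kv1.
have := @key4 s r z1 t1 v1 1 (- kAq r) (- kBq r) (- gam r).
rewrite az bz cz at' bt ct av bv cv /gam => h.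
have {}h := h ltac:(ring) ltac:(ring) ltac:(ring).
move: h; move: (q s r) (q s z1) (q s t1) (q s v1) => Q0 Q1 Q2 Q3 h.
apply/eqP; rewrite -subr_eq0; apply/eqP; rewrite -[RHS]h; ring.
Qed.

Lemma qvv : q v1 v1 = 0.
Proof.
have [ay [by' cy]] := ky1.
have [au [bu cu]] := ku1.
have [av [bv cv]] := kv1.
have := @key4 v1 u1 y1 v1 v1 1 1 (-1) 0.
rewrite ay by' cy au bu cu av bv cv => h.
have {}h := h ltac:(ring) ltac:(ring) ltac:(ring).
move: h; rewrite qvu qvy.
move: (q v1 v1) => Q h; lra.
Qed.

Lemma sq_rel s : q s u1 + q s z1 - q s t1 - (B + 1) * q s v1 = 0.
Proof.
have [az [bz cz]] := kz1.
have [at' [bt ct]] := kt1.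
have [au [bu cu]] := ku1.
have [av [bv cv]] := kv1.
have := @key4 s u1 z1 t1 v1 1 1 (-1) (- (B + 1)).
rewrite az bz cz at' bt ct au bu cu av bv cv => h.
have {}h := h ltac:(ring) ltac:(ring) ltac:(ring).
move: h; move: (q s u1) (q s z1) (q s t1) (q s v1) => Q0 Q1 Q2 Q3 h.
rewrite -[RHS]h; ring.
Qed.

Lemma qzz : q z1 z1 = B.
Proof.
have := sq_rel z1; rewrite qzu qzt qzv.
move: (q z1 z1) => Q h; lra.
Qed.

Lemma qtt : q t1 t1 = - (B + 1).
Proof.
have := sq_rel t1; rewrite qtu (q_sym t1 z1) qzt qtv.
move: (q t1 t1) => Q h; lra.
Qed.

Definition Eq r := kAq r ^+ 2 * B - kBq r ^+ 2 * (B + 1) + 2 * kAq r * gam r + 2 * kBq r * gam r.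
Lemma qrr r : q r r = Eq r.
Proof.
rewrite {1}dec (q_sym r z1) (q_sym r t1) (q_sym r v1) (dec z1 r) (dec t1 r) (dec v1 r).
rewrite qzz qzt qzv (q_sym t1 z1) qzt qtt qtv (q_sym v1 z1) qzv (q_sym v1 t1) qtv qvv.
rewrite /Eq; ring.
Qed.

Hypothesis hb : forall i, (1 <= i <= p3)%N -> (b 1 <= b i)%N.

Lemma sum_bound : \sum_r q r r <= - p1%:R + p2%:R * B - p3%:R * (B + 1) - p4%:R.
Proof.
rewrite (eq_bigr _ (fun r _ => qrr r)) sumG.
have ev : \sum_(i < p0) Eq (gv i) = 0.
  by apply: big1 => i _; have [a [b' c']] := kv_v i; rewrite /Eq /gam a b' c'; ring.
have ey : \sum_(i < p1) Eq (gy i) = - p1%:R.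
  rewrite (eq_bigr (fun _ => -1)) => [|i _]; last first.
    by have [a [b' c']] := kv_y i; rewrite /Eq /gam a b' c'; ring.
  by rewrite sumr_const card_ord mulNrn.
have eu : \sum_(i < p4) Eq (gu i) = - p4%:R.
  rewrite (eq_bigr (fun _ => -1)) => [|i _]; last first.
    by have [a [b' c']] := kv_u i; rewrite /Eq /gam a b' c'; ring.
  by rewrite sumr_const card_ord mulNrn.
have ez : \sum_(i < p2) Eq (gz i) <= \sum_(i < p2) B.
  apply: ler_sum => i _; have [a [b' c']] := kv_z i; rewrite /Eq /gam a b' c'.
  have : 0 <= (cc i)%:R :> rat := ler0n _ _.
  lra.
have et : \sum_(i < p3) Eq (gt i) <= \sum_(i < p3) (- (B + 1)).
  apply: ler_sum => i _; have [a [b' c']] := kv_t i; rewrite /Eq /gam a b' c'.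
  have : B <= (b i.+1)%:R.
    by rewrite /B ler_nat; apply: hb; rewrite ltnS ltn_ord.
  lra.
move: ez et; rewrite !sumr_const !card_ord ev ey eu => ez et.
rewrite -mulr_natl in ez; rewrite -mulr_natl in et.
lra.
Qed.

Lemma pc_cone_tau : pc_cone tau.
Proof.
apply/forallP => k; apply: contra (forallP pc_cone_vzt k) => h.
apply: subset_trans h _; apply/subsetP => r; rewrite !inE.
by apply: contra => /orP [/orP [] | ] ->; rewrite ?orbT.
Qed.

End Main.

Unset Implicit Arguments.
Theorem lemma3p2 (d p0 p1 p2 p3 p4 : nat) (b c : nat -> nat)
    (w : gen p0 p1 p2 p3 p4 -> 'rV[int]_d) :
  (0 < p0)%N -> (0 < p1)%N -> (0 < p2)%N -> (0 < p3)%N -> (0 < p4)%N ->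
  d = (p0 + p1 + p2 + p3 + p4 - 3)%N ->
  smooth_complete_fan w pc_cone ->
  \sum_(i < p0) w (gv i) + \sum_(i < p1) w (gy i)
    = \sum_(j < p2 | (0 < j)%N) w (gz j) *+ c j.+1
      + \sum_(i < p3) w (gt i) *+ (b i.+1).+1 ->
  \sum_(i < p1) w (gy i) + \sum_(i < p2) w (gz i) = \sum_(i < p4) w (gu i) ->
  \sum_(i < p2) w (gz i) + \sum_(i < p3) w (gt i) = 0 ->
  \sum_(i < p3) w (gt i) + \sum_(i < p4) w (gu i) = \sum_(i < p1) w (gy i) ->
  \sum_(i < p4) w (gu i) + \sum_(i < p0) w (gv i)
    = \sum_(j < p2 | (0 < j)%N) w (gz j) *+ c j.+1
      + \sum_(i < p3) w (gt i) *+ b i.+1 ->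
  (forall i, (1 <= i <= p3)%N -> (b 1 <= b i)%N) ->
  (forall j, (2 <= j <= p2)%N -> (c 2 <= c j)%N) ->
  ch2_nef w pc_cone ->
  (1 <= b 1)%N /\ (p3 < p2)%N /\ (2 <= p2)%N.
Proof.
move=> H0 H1 H2 H3 H4 hd Hfan _ R2 _ R4 R5 hb _ [deg [Hdeg Hnef]].
have hsum := sum_bound H0 H1 H2 H3 H4 hd Hfan R2 R4 R5 Hdeg hb.
have hn := Hnef _ (pc_cone_tau H0 H1 H2 H3 H4) (card_tau H0 H1 H2 H3 H4 hd).
have h0 : 0 <= \sum_r q H0 H1 H2 H3 H4 deg r r.
  move: hn; rewrite /ch2_dot.
  have -> : \sum_r deg (madd (set_mono (tau H0 H1 H2 H3 H4)) (madd (unit_mono r) (unit_mono r)))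
     = \sum_r q H0 H1 H2 H3 H4 deg r r by [].
  move: (\sum_r _) => Q hQ.
  rewrite -(pmulr_rge0 _ (_ : 0 < 2^-1)) //.
have hnat : (p1 + p3 * (b 1 + 1) + p4 <= p2 * b 1)%N.
  rewrite -(ler_nat rat) !natrD !natrM.
  move: hsum h0; rewrite /B; move: (\sum_r _) => Q.
  rewrite -mulNrn; lra.
have hb1 : (1 <= b 1)%N by move: hnat; case: (b 1) => //; lia.
split => //.
have : (p3 * b 1 < p2 * b 1)%N by lia.
by rewrite ltn_pmul2r //; move=> h; split => //; lia.
Qed.
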